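(* Let $l\geq 2$ be an integer and let $n=\binom{2l+1}{l}+1$. Then $\chi'_{D_2}(\overleftrightarrow{K_n})<\chi'_{D_{1,2}}(\overleftrightarrow{K_n})$.
   Context: For a simple graph $G$, the symmetric digraph $\overleftrightarrow{G}$ is obtained by replacing each edge $uv$ of $G$ by the pair of opposite arcs $\overrightarrow{uv}$ and $\overrightarrow{vu}$; $K_n$ is the complete graph on $n$ vertices. A monochromatic 2-path is a pair of arcs $\overrightarrow{uv},\overrightarrow{vw}$ with $w\neq u$ of the same colour; a monochromatic 2-cycle is a pair $\overrightarrow{uv},\overrightarrow{vu}$ of the same colour. An arc-colouring is distinguishing if the only automorphism of $\overleftrightarrow{G}$ preserving the colour of every arc is the identity. $\chi'_{D_{1,2}}(\overleftrightarrow{G})$ is the least number of colours in a distinguishing arc-colouring with no monochromatic 2-cycles and no monochromatic 2-paths; $\chi'_{D_2}(\overleftrightarrow{G})$ is the least number of colours in a distinguishing arc-colouring with no monochromatic 2-paths. *)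

(* Defs.v *)
From mathcomp Require Import all_boot all_order all_fingroup.
Set Implicit Arguments. Unset Strict Implicit. Unset Printing Implicit Defensive.

(* A simple graph is a symmetric irreflexive relation e on a finite vertex type T.
   The symmetric digraph <->G has arc set {(u,v) | e u v}.
   An arc colouring with k colours is a function c : T -> T -> 'I_k
   (only its values on arcs (u,v) with e u v matter). *)

Section ArcColourings.
Variables (T : finType) (e : rel T).

Definition is_digraph_aut (s : {perm T}) : Prop :=
  forall u v, e (s u) (s v) = e u v.

Definition distinguishing (k : nat) (c : T -> T -> 'I_k) : Prop :=
  forall s : {perm T}, is_digraph_aut s ->
    (forall u v, e u v -> c (s u) (s v) = c u v) -> s = 1%g.

Definition no_mono_2path (k : nat) (c : T -> T -> 'I_k) : Prop :=
  forall u v w, e u v -> e v w -> w != u -> c u v != c v w.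

Definition no_mono_2cycle (k : nat) (c : T -> T -> 'I_k) : Prop :=
  forall u v, e u v -> c u v != c v u.

Definition D2_colourable (k : nat) : Prop :=
  exists c : T -> T -> 'I_k, distinguishing c /\ no_mono_2path c.

Definition D12_colourable (k : nat) : Prop :=
  exists c : T -> T -> 'I_k,
    [/\ distinguishing c, no_mono_2cycle c & no_mono_2path c].

End ArcColourings.

Definition is_least (P : nat -> Prop) (k : nat) : Prop :=
  P k /\ forall m, P m -> k <= m.

Definition Kn (n : nat) : rel 'I_n := fun u v => u != v.

Definition chiD2_is (T : finType) (e : rel T) (k : nat) := is_least (D2_colourable e) k.
Definition chiD12_is (T : finType) (e : rel T) (k : nat) := is_least (D12_colourable e) k.

(* Main.v *)
Require Import Defs.
From mathcomp Require Import all_boot all_order all_fingroup.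
From mathcomp Require Import zify.
Set Implicit Arguments. Unset Strict Implicit. Unset Printing Implicit Defensive.


Lemma LYM (T : finType) (k : nat) (D : {set T}) (F : {set {set T}}) :
  #|D| = k ->
  (forall A, A \in F -> A \subset D) ->
  (forall A B, A \in F -> B \in F -> A \subset B -> A = B) ->
  \sum_(A in F) (#|A|`! * (k - #|A|)`!) <= k`!.
Proof.
elim: k D F => [|k IH] D F Dk sub anti.
  case: (boolP (D \in F)) => DF.
    rewrite (bigD1 D) //= big1 ?Dk ?addn0 //.
    move=> A /andP [AF AD]; exfalso; move/negP: AD; apply.
    by apply/eqP; apply: anti => //; apply: sub.
  rewrite big1 // => A AF; exfalso; move/negP: DF; apply.
  have D0 : D = set0 by apply/eqP; rewrite -cards_eq0 Dk.
  have := sub A AF; rewrite D0 subset0 => /eqP eA; by rewrite -eA.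
case: (boolP (D \in F)) => DF.
  have FD : F = [set D].
    apply/setP => A; rewrite in_set1; apply/idP/eqP => [AF|->//].
    by apply: anti => //; apply: sub.
  by rewrite FD big_set1 Dk subnn fact0 muln1.
have Hprop A : A \in F -> #|A| <= k.
  move=> AF; have := sub A AF; rewrite -ltnS -Dk => AD.
  rewrite ltn_neqAle subset_leq_card // andbT.
  apply/negP => /eqP e; move/negP: DF; apply.
  suff <- : A = D by [].
  apply/eqP; rewrite eqEcard AD /= e; exact: leqnn.
have step A : A \in F ->
   #|A|`! * (k.+1 - #|A|)`! = \sum_(x in D | x \notin A) (#|A|`! * (k - #|A|)`!).
  move=> AF; rewrite sum_nat_const.
  have -> : #|[pred x in D | x \notin A]| = #|D :\: A|.
    by apply: eq_card => x; rewrite !inE andbC.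
  rewrite cardsDS ?sub // Dk subSn ?Hprop // factS; lia.
rewrite (eq_bigr _ step).
rewrite (exchange_big_dep (fun x => x \in D)) /=; last by move=> i j _ /andP[].
rewrite factS -[k.+1 in X in _ <= X]Dk -sum_nat_const.
apply: leq_sum => x xD.
pose Fx := [set A in F | x \notin A].
apply: leq_trans (IH (D :\ x) Fx _ _ _); first by apply: eq_leq; apply: eq_bigl => A; rewrite !inE xD.
- by move: Dk; rewrite (cardsD1 x D) xD add1n => -[].
- move=> A; rewrite inE => /andP [AF xA]; apply/subsetP => y yA.
  rewrite !inE (subsetP (sub A AF)) // andbT.
  by apply/eqP => e; rewrite -e yA in xA.
- by move=> A B; rewrite !inE => /andP[AF _] /andP[BF _]; apply: anti.
Qed.

Lemma fact_mid m a0 : a0 <= m -> (m./2)`! * (m - m./2)`! <= a0`! * (m - a0)`!.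
Proof.
move: a0.
set h := m./2.
have hm : h.*2 <= m <= h.*2.+1.
  by have := odd_double_half m; rewrite -/h; case: (odd m) => /= <-; rewrite ?leqnn ?leqnSn.
pose g b := b`! * (m - b)`!.
have down a : a < h -> g a.+1 <= g a.
  move=> ah; rewrite /g.
  have e : m - a = (m - a.+1).+1 by lia.
  rewrite e factS factS.
  have : a.+1 <= (m - a.+1).+1 by lia.
  move=> H; set u := a`!; set v := (m - a.+1)`!; nia.
have up a : h <= a -> a < m -> g a <= g a.+1.
  move=> ha am; rewrite /g.
  have e : m - a = (m - a.+1).+1 by lia.
  rewrite e factS factS.
  have : (m - a.+1).+1 <= a.+1 by lia.
  move=> H; set u := a`!; set v := (m - a.+1)`!; nia.
move=> a am; rewrite -/(g h) -/(g a).
case: (leqP a h) => ah.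
  move: ah am; move Hd: (h - a) => d; elim: d a Hd => [|d IHd] a Hd ah am.
    by have -> : a = h by lia.
  apply: leq_trans (IHd a.+1 _ _ _) _; try lia.
  by apply: down; lia.
have : h <= a by lia.
clear ah; move: am; move Hd: (a - h) => d; elim: d a Hd => [|d IHd] a Hd am ha.
  by have -> : a = h by lia.
case: a Hd am ha => [|a] Hd am ha; first lia.
apply: leq_trans (IHd a _ _ _) _; try lia.
by apply: up; lia.
Qed.

Lemma sperner (T : finType) (F : {set {set T}}) :
  (forall A B, A \in F -> B \in F -> A \subset B -> A = B) ->
  #|F| <= 'C(#|T|, #|T|./2).
Proof.
move=> anti.
set m := #|T|.
have hm : m./2 <= m by rewrite -{2}(odd_double_half m); lia.
have := LYM (k := m) (D := setT) (F := F) (cardsT _) (fun A _ => subsetT A) anti.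
have pos : 0 < (m./2)`! * (m - m./2)`! by rewrite muln_gt0 !fact_gt0.
rewrite -(bin_fact hm) => H.
rewrite -(leq_pmul2r pos); apply: leq_trans H.
rewrite -sum_nat_const; apply: leq_sum => A _; apply: fact_mid.
by rewrite /m -cardsT subset_leq_card ?subsetT.
Qed.

Lemma D12_lower l m : D12_colourable (@Kn ('C((2 * l).+1, l) + 1)) m -> (2 * l).+1 < m.
Proof.
set n := 'C((2 * l).+1, l) + 1.
move=> [c [_ h2c h2p]]; rewrite ltnNge; apply/negP => Hm.
pose c' (u v : 'I_n) : 'I_(2 * l).+1 := widen_ord Hm (c u v).
have c'E u v w x : (c' u v == c' w x) = (c u v == c w x).
  apply/eqP/eqP => [/(congr1 val) /= e|e]; [exact: val_inj|by rewrite /c' e].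
pose S (v : 'I_n) := [set col | [exists w, (w != v) && (c' v w == col)]].
have key u v : u != v -> c' u v \notin S v.
  move=> uv; rewrite inE; apply/negP => /existsP [w /andP [wv /eqP e]].
  case: (eqVneq w u) => [wu|wu].
    have vu : v != u by rewrite eq_sym.
    by subst w; move: (h2c v u vu); rewrite -c'E e eqxx.
  have vw : v != w by rewrite eq_sym.
  by move: (h2p u v w uv vw wu); rewrite -c'E e eqxx.
have inS u v : u != v -> c' u v \in S u.
  by move=> uv; rewrite inE; apply/existsP; exists v; rewrite eq_sym uv eqxx.
have Sinj : injective S.
  move=> u v e; apply/eqP; apply/negPn/negP => uv.
  by move: (key u v uv); rewrite -e inS.
pose F := S @: setT.
have antiF : forall A B, A \in F -> B \in F -> A \subset B -> A = B.
  move=> A B /imsetP [u _ ->] /imsetP [v _ ->] sub.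
  case: (eqVneq u v) => [->//|uv].
  by move: (key u v uv); rewrite (subsetP sub) ?inS.
have := sperner antiF.
rewrite card_imset // cardsT !card_ord.
have -> : ((2 * l).+1)./2 = l.
  by rewrite mul2n /= uphalf_double.
by rewrite /n addn1 ltnn.
Qed.

Definition optc l (o : option 'I_(2 * l)) : 'I_(2 * l).+1 :=
  if o is Some x then lift ord0 x else ord0.
Definition second l (X : {set 'I_(2 * l)}) : option 'I_(2 * l) :=
  [pick x in X | Some x != [pick y in X]].

Lemma second_spec l (X : {set 'I_(2 * l)}) : 2 <= #|X| ->
  exists x1 x2, [/\ [pick y in X] = Some x1, second X = Some x2,
                    x1 \in X, x2 \in X & x1 != x2].
Proof.
move=> cX.
case E: [pick y in X] => [x1|]; last first.
  by move: E; case: pickP => // h _; move: cX; rewrite (eq_card0 h).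
have x1X : x1 \in X by move: E; case: pickP => // y yX [<-].
rewrite /second E; case: pickP => [x2 /andP [x2X ne]|h].
  by exists x1, x2; split => //; rewrite eq_sym; apply: contra ne => /eqP ->.
exfalso; move: cX; rewrite (cardsD1 x1) x1X.
have -> : X :\ x1 = set0.
  apply/setP => y; rewrite !inE; apply/negP => /andP [yx yX].
  by have := h y; rewrite yX /=; rewrite (inj_eq (@Some_inj _)) yx.
by rewrite cards0.
Qed.

Lemma D2_construct l (V : finType) (L : V -> {set 'I_(2 * l)}) (cp : V -> bool) :
  2 <= l -> (forall v, #|L v| = l) ->
  (forall u v, L u = L v -> cp u = cp v -> u = v) ->
  (forall X : {set 'I_(2 * l)}, #|X| = l -> exists v, L v = X) ->
  D2_colourable (fun u v : V => u != v) (2 * l).+1.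
Proof.
move=> hl HL Hinj Hsurj.
pose col (u v : V) : 'I_(2 * l).+1 :=
  if L u == L v then ord0
  else if (L v == ~: L u) && cp u then optc (second (L u))
  else optc [pick x in L u :\: L v].
have liftE (j j' : 'I_(2 * l)) : (lift ord0 j == lift ord0 j') = (j == j').
  exact: (inj_eq (@lift_inj _ ord0)).
have lift0 (j : 'I_(2 * l)) : (ord0 == lift ord0 j) = false.
  by apply/negbTE; rewrite neq_lift.
have cardC (X : {set 'I_(2 * l)}) : #|X| = l -> #|~: X| = l.
  by move=> cX; have := cardsC X; rewrite card_ord cX; lia.
have F1 u v : L u != L v ->
    exists2 j, col u v = lift ord0 j & (j \in L u) && (j \notin L v).
  move=> ne; rewrite /col (negbTE ne).
  case: ifP => [/andP [/eqP Ec _]|_].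
    have c2 : 2 <= #|L u| by rewrite HL.
    have [x1 [x2 [_ -> _ x2X _]]] := second_spec c2.
    by exists x2 => //; rewrite x2X Ec inE negbK.
  case: pickP => [j|h]; first by rewrite inE => /andP [jv ju]; exists j; rewrite ?ju ?jv.
  exfalso; move/negP: ne; apply.
  rewrite eqEcard !HL leqnn andbT; apply/subsetP => x xu.
  by move: (h x); rewrite inE xu andbT => /negbFE.
have F3 v j : (j \in L v) = [exists w, (w != v) && (col v w == lift ord0 j)].
  apply/idP/existsP; last first.
    move=> [w /andP [wv /eqP e]].
    case: (eqVneq (L v) (L w)) => E.
      by move: e; rewrite /col E eqxx => /eqP; rewrite lift0.
    have [j' e' /andP [j'v _]] := F1 v w E.
    by move: e; rewrite e' => /eqP; rewrite liftE => /eqP <-.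
  move=> jX; set X := L v in jX *.
  have /set0Pn [d dC] : ~: X != set0 by rewrite -card_gt0 cardC ?HL //; lia.
  have cXj : #|X :\ j| = l.-1 by have := cardsD1 j X; rewrite jX HL; lia.
  have /set0Pn [x xXj] : X :\ j != set0 by rewrite -card_gt0 cXj; lia.
  have dX : d \notin X by rewrite inE in dC.
  have dXj : d \notin X :\ j by rewrite inE negb_and dX orbT.
  have cY : #|d |: (X :\ j)| = l by rewrite cardsU1 dXj cXj; lia.
  have [w Lw] := Hsurj _ cY.
  exists w.
  have ne : L v != L w.
    by apply/negP => /eqP e; move: dX; rewrite /X e Lw setU11.
  rewrite /col (negbTE ne) -/X.
  have ne2 : (L w == ~: X) = false.
    apply/negbTE/negP => /eqP e; move: (xXj); rewrite inE => /andP [_ xX].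
    have : x \in L w by rewrite Lw inE xXj orbT.
    by rewrite e inE xX.
  rewrite ne2 /= Lw.
  have -> : X :\: (d |: X :\ j) = [set j].
    apply/setP => y; rewrite !inE.
    have jd : (j == d) = false by apply/negbTE; apply: contra dX => /eqP <-.
    case: (eqVneq y j) => [->|yj] /=; first by rewrite jX jd.
    by case: (y \in X); rewrite ?orbT ?andbF.
  rewrite pick_set1 eqxx andbT.
  apply/negP => /eqP e; rewrite -e in ne; by rewrite eqxx in ne.
exists col; split.
  move=> s _ hs.
  have HLs v : L (s v) = L v.
    apply/setP => j; rewrite !F3; apply/existsP/existsP.
      move=> [w /andP [wsv /eqP e]]; exists ((s^-1)%g w).
      have w'v : (s^-1)%g w != v.
        by apply: contra wsv => /eqP <-; rewrite permKV.
      have vw' : v != (s^-1)%g w by rewrite eq_sym.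
      by rewrite w'v /= -(hs v _ vw') permKV e.
    move=> [w /andP [wv /eqP e]]; exists (s w).
    have vw : v != w by rewrite eq_sym.
    rewrite (hs v w vw) e eqxx andbT. by apply: contra wv => /eqP /perm_inj ->.
  apply/permP => v; rewrite perm1; apply/eqP/negPn/negP => nv.
  have cpne : cp (s v) != cp v.
    by apply/negP => /eqP ec; move/negP: nv; apply; apply/eqP; apply: Hinj.
  have [w Lw] := Hsurj (~: L v) (cardC _ (HL v)).
  have /set0Pn [x xv] : L v != set0 by rewrite -card_gt0 HL; lia.
  have nvC : (L v == ~: L v) = false.
    by apply/negbTE/negP => /eqP e; move: (xv); rewrite {1}e inE xv.
  have vw : v != w.
    by apply/negP => /eqP e; subst w; move: nvC; rewrite -{1}Lw eqxx.
  have := hs v w vw; rewrite /col !HLs Lw nvC eqxx /= setDE setCK setIid.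
  have c2 : 2 <= #|L v| by rewrite HL.
  have [x1 [x2 [-> -> _ _ ne]]] := second_spec c2.
  move=> /=; move: cpne; case: (cp v); case: (cp (s v)) => //= _ /eqP;
    by rewrite liftE => /eqP e; rewrite e eqxx in ne.
move=> u v w uv vw wu.
case: (eqVneq (L u) (L v)) => Euv.
  have cuv : col u v = ord0 by rewrite /col Euv eqxx.
  rewrite cuv; case: (eqVneq (L v) (L w)) => Evw.
    exfalso.
    have c1 : cp u != cp v.
      by apply/negP => /eqP e; move/negP: uv; apply; apply/eqP; apply: Hinj.
    have c2 : cp v != cp w.
      by apply/negP => /eqP e; move/negP: vw; apply; apply/eqP; apply: Hinj.
    have e : cp w = cp u by move: c1 c2; case: (cp u); case: (cp v); case: (cp w).
    move/negP: wu; apply; apply/eqP; apply: Hinj => //; by rewrite Euv.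
  by have [j -> _] := F1 v w Evw; rewrite lift0.
have [j -> /andP [_ jv]] := F1 u v Euv.
case: (eqVneq (L v) (L w)) => Evw.
  by rewrite /col Evw eqxx eq_sym lift0.
have [j' -> /andP [j'v _]] := F1 v w Evw.
by rewrite liftE; apply/negP => /eqP e; rewrite e j'v in jv.
Qed.
From Stdlib Require Import Classical.

Lemma least_exists (P : nat -> Prop) : (exists k, P k) -> exists k, is_least P k.
Proof.
move=> [k Pk]; elim/ltn_ind: k Pk => k IH Pk.
case: (classic (forall m, P m -> k <= m)) => H; first by exists k.
apply not_all_ex_not in H; case: H => m Hm.
apply: (IH m) => //.
  by rewrite ltnNge; apply/negP => km; apply: Hm.
by apply: NNPP => nP; apply: Hm.
Qed.

Lemma D2_upper l : 2 <= l -> D2_colourable (@Kn ('C((2 * l).+1, l) + 1)) (2 * l).+1.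
Proof.
move=> hl.
set n := 'C((2 * l).+1, l) + 1.
pose Ls := [set X : {set 'I_(2 * l)} | #|X| == l].
pose es := enum Ls.
pose M := size es.
have ME : M = 'C(2 * l, l) by rewrite /M -cardE card_draws card_ord.
have Mpos : 0 < M by rewrite ME bin_gt0; lia.
have B : 'C((2 * l).+1, l) = 'C(2 * l, l) + 'C(2 * l, l.-1).
  by case: (l) hl => [//|l0] _; rewrite binS.
have R : l * 'C(2 * l, l) = l.+1 * 'C(2 * l, l.-1).
  case: (l) hl => [//|l0] _; rewrite mul_bin_left /=; congr (_ * _); lia.
have nM : n <= M + M.
  rewrite /n B -ME; rewrite -ME in R.
  have : l.+1 * 'C(2 * l, l.-1) < l.+1 * M by rewrite -R ltn_pmul2r.
  rewrite ltn_pmul2l // => h; lia.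
have Mn : M < n.
  by rewrite /n B -ME; lia.
pose idx (v : 'I_n) : nat := if v < M then nat_of_ord v else v - M.
have idxM v : idx v < M.
  rewrite /idx; case: (ltnP v M) => // h; have := ltn_ord v; move: nM h; clearbody n M; clear; lia.
pose L (v : 'I_n) := nth set0 es (idx v).
pose cp (v : 'I_n) := M <= v.
apply: (@D2_construct l _ L cp hl).
- move=> v; have : L v \in es by rewrite mem_nth.
  by rewrite mem_enum inE => /eqP.
- move=> u v e ecp.
  have hid : idx u = idx v.
    by apply/eqP; rewrite -(nth_uniq set0 (idxM u) (idxM v) (enum_uniq _)); apply/eqP.
  apply: val_inj; move: hid ecp; rewrite /idx /cp.
  case: (ltnP u M); case: (ltnP v M) => //= h1 h2; lia.
- move=> X cX.
  have Xe : X \in es by rewrite mem_enum inE cX.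
  have iM : index X es < M by rewrite index_mem.
  exists (Ordinal (ltn_trans iM Mn)).
  by rewrite /L /idx /= iM nth_index.
Qed.

Lemma D12_exists n : 1 < n -> exists m, D12_colourable (@Kn n) m.
Proof.
move=> n1.
exists #|{: 'I_n * 'I_n}|.
exists (fun u v => enum_rank (u, v)); split.
- move=> s _ hs; apply/permP => u; rewrite perm1.
  pose x0 : 'I_n := Ordinal (ltnW n1).
  pose x1 : 'I_n := Ordinal n1.
  have x01 : x0 != x1 by [].
  pose v := if u == x0 then x1 else x0.
  have uv : u != v.
    by rewrite /v; case: (eqVneq u x0) => [->|//]; rewrite x01.
  have := hs u v uv => /enum_rank_inj [] //.
- move=> u v uv; rewrite (inj_eq enum_rank_inj) xpair_eqE.
  by rewrite (negbTE uv).
- move=> u v w uv _ _; rewrite (inj_eq enum_rank_inj) xpair_eqE.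
  by rewrite (negbTE uv).
Qed.

Theorem proposition4p5 (l : nat) (hl : 2 <= l) :
  let n := 'C(2 * l + 1, l) + 1 in
  exists k1 k2 : nat,
    [/\ chiD2_is (@Kn n) k1, chiD12_is (@Kn n) k2 & k1 < k2].
Proof.
rewrite [2 * l + 1]addn1 /=.
have hD2 := D2_upper hl.
have [k1 [Pk1 mink1]] := least_exists (ex_intro _ _ hD2).
have n1 : 1 < 'C((2 * l).+1, l) + 1 by rewrite addn1 ltnS bin_gt0; lia.
have [k2 [Pk2 mink2]] := least_exists (D12_exists n1).
exists k1, k2; split => //.
apply: leq_ltn_trans (mink1 _ hD2) (D12_lower Pk2).
Qed.
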